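(* Let $n,k,m$ be positive integers with $\frac32k<m<2k$, $2m-3k$ odd, and $\operatorname{lcm}(4m-6k,\,4k-2m)\mid n$. Then $$N_P(n,k,m)\le \frac{3k-m+1}{2}\,n.$$
   Context: Fix a finite field $\mathbb{F}_q$; $[n]=\{1,\dots,n\}$. An $(n,N,k,m)$-PIR array code over $\mathbb{F}_q$ is an $\mathbb{F}_q$-linear map $\mathbf x\in\mathbb{F}_q^n\mapsto(\mathbf c_1,\dots,\mathbf c_m)$ with buckets $\mathbf c_\ell\in\mathbb{F}_q^{N_\ell}$, $N_\ell\ge1$ independent of $\mathbf x$, $\sum_\ell N_\ell=N$, such that for each $i\in[n]$ there is a partition of $[m]$ into $k$ sets $R_1,\dots,R_k$ such that for each $j$, $x_i$ is an $\mathbb{F}_q$-linear combination of values $f_\ell(\mathbf c_\ell)$, $\ell\in R_j$, for some linear functionals $f_\ell:\mathbb{F}_q^{N_\ell}\to\mathbb{F}_q$ (independent of $\mathbf x$). $N_P(n,k,m)$ is the minimum $N$ for which such a code exists. *)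

(* Defs.v *)
From HB Require Import structures.
From mathcomp Require Import all_boot all_order all_algebra all_field.
Set Implicit Arguments. Unset Strict Implicit. Unset Printing Implicit Defensive.
Import GRing.Theory.
Local Open Scope ring_scope.

(* Bucket l (l : 'I_m) has size Nb l and its content is the image of the
   data row vector x : 'rV_n under the linear map x |-> x *m G l,
   with G l : 'M_(n, Nb l) (every linear map F^n -> F^(Nb l) is of this form).
   A linear functional f_l : F^(Nb l) -> F is represented by a column vector
   f l : 'cV_(Nb l), acting as c |-> (c *m f l) 0 0. *)

Definition PIR_recovers (F : finFieldType) (n k m : nat) (Nb : 'I_m -> nat)
    (G : forall l : 'I_m, 'M[F]_(n, Nb l)) (i : 'I_n) : Prop :=
  exists P : {set {set 'I_m}},
    [/\ partition P [set: 'I_m], #|P| = k &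
    exists f : forall l : 'I_m, 'cV[F]_(Nb l),
      forall R, R \in P ->
        exists a : 'I_m -> F,
          forall x : 'rV[F]_n,
            x 0 i = \sum_(l in R) a l * ((x *m G l) *m f l) 0 0].

Definition is_PIR_array_code (F : finFieldType) (n k m : nat)
    (Nb : 'I_m -> nat) (G : forall l : 'I_m, 'M[F]_(n, Nb l)) : Prop :=
  (forall l, (0 < Nb l)%N) /\ (forall i : 'I_n, PIR_recovers k G i).

Definition total_size (m : nat) (Nb : 'I_m -> nat) : nat := (\sum_(l < m) Nb l)%N.

(* Main.v *)
Require Import Defs.
From HB Require Import structures.
From mathcomp Require Import all_boot all_order all_algebra all_field.
From mathcomp Require Import zify ring.

Lemma modcase x d : 0 < d -> x < 3 * d ->
  exists r, x %% d = r /\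
  (x < d /\ r = x \/ d <= x < 2 * d /\ r = x - d \/ 2 * d <= x /\ r = x - 2 * d).
Proof.
move=> Hd Hx; exists (x %% d); split => //; have E := divn_eq x d; have Hr := ltn_pmod x Hd.
have : x %/ d < 3 by rewrite ltn_divLR // mulnC.
move: E Hr; set qq := x %/ d; set rr := x %% d.
case: qq => [|[|[|qq]]] //= E Hr _; lia.
Qed.

Lemma uniqZ p v Z Z' : v < p.*2.+1 -> Z < p.*2.+1 -> Z' < p.*2.+1 ->
  (Z.*2 + p.*2.+1 - v) %% p.*2.+1 = (Z'.*2 + p.*2.+1 - v) %% p.*2.+1 -> Z = Z'.
Proof.
move=> Hv HZ HZ'.
have L1 : Z.*2 + p.*2.+1 - v < 3 * p.*2.+1 by lia.
have L2 : Z'.*2 + p.*2.+1 - v < 3 * p.*2.+1 by lia.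
have [r1 [-> H1]] := modcase (Z.*2 + p.*2.+1 - v) p.*2.+1 (ltn0Sn _) L1.
have [r2 [-> H2]] := modcase (Z'.*2 + p.*2.+1 - v) p.*2.+1 (ltn0Sn _) L2.
lia.
Qed.

Lemma edge p v j Z w s : v < p.*2.+1 -> j < p.*2.+1 -> Z < p.*2.+1 ->
  (Z.*2 + p.*2.+1 - v) %% p.*2.+1 = j -> j != v ->
  w = (v + p.*2.+1 - Z) %% p.*2.+1 -> s = (if w <= p then w else p.*2.+1 - w) ->
  0 < s <= p /\ (((Z + s) %% p.*2.+1 == v) && ((Z + p.*2.+1 - s) %% p.*2.+1 == j)
     || ((Z + s) %% p.*2.+1 == j) && ((Z + p.*2.+1 - s) %% p.*2.+1 == v)).
Proof.
move=> Hv Hj HZ E ne Ew Es.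
have L1 : Z.*2 + p.*2.+1 - v < 3 * p.*2.+1 by lia.
have L2 : v + p.*2.+1 - Z < 3 * p.*2.+1 by lia.
have [r1 [E1 H1]] := modcase (Z.*2 + p.*2.+1 - v) p.*2.+1 (ltn0Sn _) L1.
rewrite E1 in E; clear E1.
have [r2 [E2 H2]] := modcase (v + p.*2.+1 - Z) p.*2.+1 (ltn0Sn _) L2.
rewrite E2 in Ew; clear E2; move/eqP: ne => ne.
have Hs : 0 < s <= p by rewrite Es; case: ifP; lia.
split => //.
have L3 : Z + s < 3 * p.*2.+1 by move: Hs HZ; clear; lia.
have L4 : Z + p.*2.+1 - s < 3 * p.*2.+1 by move: Hs HZ; clear; lia.
have [r3 [-> H3]] := modcase (Z + s) p.*2.+1 (ltn0Sn _) L3.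
have [r4 [-> H4]] := modcase (Z + p.*2.+1 - s) p.*2.+1 (ltn0Sn _) L4.
have Hw : (Z <= v /\ w = v - Z) \/ (v < Z /\ w = v + p.*2.+1 - Z).
  by move: H2 Ew Hv HZ; clear; move=> [[? ?]|[[? ?]|[? ?]]]; lia.
clear H2 Ew L1 L2 L3 L4.
move: Es; case: ifP => Hc Es.
  apply/orP; left; apply/andP; split; apply/eqP.
    by clear H1 H4 E; case: H3 => [[? ?]|[[? ?]|[? ?]]]; case: Hw => [[? ?]|[? ?]]; lia.
  by clear H3; case: H4 => [[? ?]|[[? ?]|[? ?]]]; case: Hw => [[? ?]|[? ?]]; case: H1 => [[? ?]|[[? ?]|[? ?]]]; lia.
apply/orP; right; apply/andP; split; apply/eqP.
  by clear H4; case: H3 => [[? ?]|[[? ?]|[? ?]]]; case: Hw => [[? ?]|[? ?]]; case: H1 => [[? ?]|[[? ?]|[? ?]]]; lia.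
by clear H1 H3 E; case: H4 => [[? ?]|[[? ?]|[? ?]]]; case: Hw => [[? ?]|[? ?]]; lia.
Qed.

Lemma exZ p v j : v < p.*2.+1 -> j < p.*2.+1 ->
  exists2 Z, Z < p.*2.+1 & (Z.*2 + p.*2.+1 - v) %% p.*2.+1 = j.
Proof.
move=> Hv Hj.
case: (boolP (odd (j + v))) => Ho.
  case: (ltnP (j + v) p.*2.+1) => Hs.
    exists ((j + v + p.*2.+1) %/ 2); first by move: Ho Hs Hv Hj; clear; lia.
    have L : ((j + v + p.*2.+1) %/ 2).*2 + p.*2.+1 - v < 3 * p.*2.+1 by move: Ho Hs Hv Hj; clear; lia.
    have [r [-> H]] := modcase _ _ (ltn0Sn _) L.
    by move: H Ho Hs Hv Hj; clear; lia.
  exists ((j + v - p.*2.+1) %/ 2); first by move: Ho Hs Hv Hj; clear; lia.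
  have L : ((j + v - p.*2.+1) %/ 2).*2 + p.*2.+1 - v < 3 * p.*2.+1 by move: Ho Hs Hv Hj; clear; lia.
  have [r [-> H]] := modcase _ _ (ltn0Sn _) L.
  by move: H Ho Hs Hv Hj; clear; lia.
exists ((j + v) %/ 2); first by move: Ho Hv Hj; clear; lia.
have L : ((j + v) %/ 2).*2 + p.*2.+1 - v < 3 * p.*2.+1 by move: Ho Hv Hj; clear; lia.
have [r [-> H]] := modcase _ _ (ltn0Sn _) L.
by move: H Ho Hv Hj; clear; lia.
Qed.

Set Implicit Arguments. Unset Strict Implicit. Unset Printing Implicit Defensive.
Import GRing.Theory.

Section Gen.
Variable F : finFieldType.

Definition NatCode (n k m : nat) (Nb : nat -> nat) (it : nat -> nat -> nat -> F) :=
  (forall l, l < m -> 0 < Nb l) /\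
  forall i, i < n -> exists (sg cc : nat -> nat) (co : nat -> F),
    [/\ forall l, l < m -> sg l < k,
        forall j, j < k -> exists2 l, l < m & sg l = j,
        forall l, l < m -> cc l < Nb l &
        forall j r, j < k -> r < n ->
          (\sum_(0 <= l < m | sg l == j) co l * it l (cc l) r = (r == i)%:R)%R].

Lemma sum_pred1 (a b x0 : nat) (P : pred nat) (G : nat -> F) :
  a <= x0 < b -> P x0 -> (forall l, a <= l < b -> P l -> l = x0) ->
  (\sum_(a <= l < b | P l) G l = G x0)%R.
Proof.
move=> /andP[h1 h2] Px0 Hu.
rewrite big_mkcond (big_cat_nat (n:=x0)) //=; last by lia.
rewrite (big_cat_nat (n:=x0.+1) (m:=x0)) //= big_nat1 Px0.
rewrite !big1_seq ?add0r ?addr0 // => l; rewrite mem_index_iota => Hl;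
  case: ifP => // Pl; have := Hu l _ Pl; lia.
Qed.

Lemma eval_term n N (it : nat -> nat -> F) (x : 'rV[F]_n) (c0 : nat) (co : F) :
  c0 < N ->
  (((x *m (\matrix_(r < n, c < N) it c r)) *m \col_(c < N) (if c == c0 :> nat then co else 0)) 0 0
   = \sum_(r < n) x 0 r * (co * it c0 r))%R.
Proof.
move=> Hc; rewrite -mulmxA mxE; apply: eq_bigr => r _; rewrite !mxE; congr (_ * _)%R.
rewrite (bigD1 (Ordinal Hc)) //= !mxE eqxx big1 ?addr0; first by rewrite mulrC.
move=> c /negbTE; rewrite !mxE -val_eqE /= => ->; by rewrite mulr0.
Qed.

Lemma to_code n k m Nb it : NatCode n k m Nb it ->
  is_PIR_array_code k (fun l : 'I_m => (\matrix_(r < n, c < Nb l) it l c r)%R).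
Proof.
move=> [H1 H2]; split; first by move=> l; apply: H1.
move=> i; have [sg [cc [co [Hs Hsurj Hcc Hsum]]]] := H2 i (ltn_ord i).
exists [set [set l : 'I_m | sg l == j] | j : 'I_k]; split.
- apply/and3P; split.
  + apply/eqP/setP => l; rewrite in_setT; apply/bigcupP.
    exists [set l' : 'I_m | sg l' == Ordinal (Hs l (ltn_ord l))]; last by rewrite inE.
    by apply: imset_f.
  + apply/trivIsetP => A B /imsetP[j _ ->] /imsetP[j' _ ->] neq.
    apply/pred0P => l /=; rewrite !inE; apply/negP => /andP[/eqP e1 /eqP e2].
    have jj : j = j' by apply: ord_inj; rewrite -e1 -e2.
    by move: neq; rewrite jj eqxx.
  + apply/imsetP => [[j _ E]]; have [l Hl Hsl] := Hsurj j (ltn_ord j).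
    have : Ordinal Hl \in [set l : 'I_m | sg l == j] by rewrite inE /= Hsl.
    by rewrite -E inE.
- rewrite card_imset ?card_ord // => j j' E.
  have [l Hl Hsl] := Hsurj j (ltn_ord j).
  have : Ordinal Hl \in [set l : 'I_m | sg l == j'] by rewrite -E inE /= Hsl.
  by rewrite inE /= Hsl => /eqP; apply: ord_inj.
- exists (fun l : 'I_m => (\col_(c < Nb l) (if c == cc l :> nat then co l else 0))%R).
  move=> R /imsetP[j _ ->]; exists (fun _ => 1%R) => x.
  under eq_bigr => l _ do rewrite mul1r (eval_term _ _ _ (Hcc l (ltn_ord l))).
  have Hconv : forall g : nat -> F, (\sum_(l in [set l0 : 'I_m | sg l0 == j]) g l
      = \sum_(0 <= l < m | sg l == j) g l)%R.
    by move=> g; rewrite big_mkord; apply: eq_bigl => l; rewrite inE.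
  rewrite exchange_big /=.
  under eq_bigr => r _ do rewrite -mulr_sumr (Hconv (fun l => co l * it l (cc l) r)%R) Hsum //.
  rewrite (bigD1 i) //= eqxx mulr1 big1 ?addr0 // => r /negbTE ne.
  by rewrite (_ : (r == i :> nat) = false) ?mulr0.
Qed.
End Gen.


Section Tr.
Variable F : finFieldType.

Lemma sum3 m (P : pred nat) (G : nat -> F) :
  (\sum_(0 <= l < m.+3 | P l) G l = \sum_(0 <= l < m | P l) G l
     + (if P m then G m else 0) + (if P m.+1 then G m.+1 else 0)
     + (if P m.+2 then G m.+2 else 0))%R.
Proof. by rewrite !(big_mkcond P) !big_nat_recr. Qed.

Definition itT (m h : nat) (it : nat -> nat -> nat -> F) l c r : F :=
  if l < m then it l c r else
  if l - m == 0 then ((r == c)%:R)%R else if l - m == 1 then ((r == (h + c)%N)%:R)%R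
  else ((r == c)%:R + (r == (h + c)%N)%:R)%R.

Lemma add_triple n k m h Nb (it : nat -> nat -> nat -> F) :
  n = h.*2 -> 0 < h -> NatCode n k m Nb it ->
  NatCode n k.+2 m.+3 (fun l => if l < m then Nb l else h) (itT m h it).
Proof.
move=> En h0 [H1 H2]; split.
  by move=> l Hl; case: ifP => // /H1.
move=> i Hi; have [sg [cc [co [Hs Hsurj Hcc Hsum]]]] := H2 i Hi.
pose sg' l := if l < m then sg l else
   if (i < h) then (if l - m == 0 then k else k.+1) else (if l - m == 1 then k else k.+1).
pose cc' l := if l < m then cc l else if i < h then i else i - h.
pose co' l : F := if l < m then co l else
   if i < h then (if l - m == 1 then (-1)%R else 1%R) else (if l - m == 0 then (-1)%R else 1%R).
exists sg', cc', co'; split.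
- move=> l Hl; rewrite /sg'; case: ifP => [/Hs|_]; first lia.
  by case: ifP; case: ifP.
- move=> j Hj; case: (ltnP j k) => Hjk.
    have [l Hl E] := Hsurj j Hjk; exists l; first lia.
    by rewrite /sg' Hl.
  have Em : sg' m = (if i < h then k else k.+1) by rewrite /sg' ltnn subnn.
  have Em1 : sg' m.+1 = (if i < h then k.+1 else k).
    by rewrite /sg' ltnNge leqnSn /= subSnn.
  case: (ltnP i h) => Hih.
    case: (j =P k) => [->|ne]; first by exists m; [lia | rewrite Em Hih].
    by exists m.+1; [lia | rewrite Em1 Hih; lia].
  case: (j =P k) => [->|ne]; first by exists m.+1; [lia | rewrite Em1 ltnNge Hih].
  by exists m; [lia | rewrite Em ltnNge Hih /=; lia].
- move=> l Hl; rewrite /cc'; case: ifP => [/Hcc //|_]; case: ifP; lia.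
- move=> j r Hj Hr; rewrite sum3.
  have Eold : (\sum_(0 <= l < m | sg' l == j) co' l * itT m h it l (cc' l) r
             = \sum_(0 <= l < m | sg l == j) co l * it l (cc l) r)%R.
    rewrite big_nat_cond [RHS]big_nat_cond; apply: eq_big => l.
      by case/boolP: (0 <= l < m) => // /andP[_ Hl]; rewrite /sg' Hl.
    by case/andP=> /andP[_ Hl] _; rewrite /co' /itT /cc' Hl.
  have Em : sg' m = (if i < h then k else k.+1) by rewrite /sg' ltnn subnn.
  have Em1 : sg' m.+1 = (if i < h then k.+1 else k).
    by rewrite /sg' ltnNge leqnSn /= subSnn.
  have Em2 : sg' m.+2 = k.+1.
    rewrite /sg'.
    have -> : (m.+2 < m) = false by lia.
    have -> : m.+2 - m = 2 by lia.
    by case: ifP.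
  have Cm : co' m = (if i < h then 1%R else (-1)%R) by rewrite /co' ltnn subnn.
  have Cm1 : co' m.+1 = (if i < h then (-1)%R else 1%R).
    by rewrite /co' ltnNge leqnSn /= subSnn.
  have Cm2 : co' m.+2 = 1%R.
    rewrite /co'.
    have -> : (m.+2 < m) = false by lia.
    have -> : m.+2 - m = 2 by lia.
    by case: ifP.
  have Ic c : itT m h it m c r = ((r == c)%:R)%R by rewrite /itT ltnn subnn.
  have Ic1 c : itT m h it m.+1 c r = ((r == (h + c)%N)%:R)%R.
    by rewrite /itT ltnNge leqnSn /= subSnn.
  have Ic2 c : itT m h it m.+2 c r = ((r == c)%:R + (r == (h + c)%N)%:R)%R.
    rewrite /itT.
    have -> : (m.+2 < m) = false by lia.
    by have -> : m.+2 - m = 2 by lia.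
  have Ccc l : m <= l -> cc' l = (if i < h then i else i - h).
    by move=> Hl; rewrite /cc' ltnNge Hl.
  rewrite Eold Em Em1 Em2 Cm Cm1 Cm2 Ic Ic1 Ic2 !Ccc; try lia.
  have nk : (k.+1 == k) = false by apply/eqP; lia.
  have nk' : (k == k.+1) = false by apply/eqP; lia.
  have [Hjk|Hjk] := ltnP j k.
    have e1 : (k == j) = false by apply/eqP; lia.
    have e2 : (k.+1 == j) = false by apply/eqP; lia.
    rewrite Hsum //; case: (ltnP i h) => Hih /=; by rewrite e1 e2 !addr0.
  have E0 : (\sum_(0 <= l < m | sg l == j) co l * it l (cc l) r = 0)%R.
    rewrite big_nat_cond big1 // => l /andP[/andP[_ Hl] /eqP e].
    have := Hs l Hl; lia.
  rewrite E0 add0r.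
  have Ehi : h <= i -> h + (i - h) = i by lia.
  have [-> | ne] := eqVneq j k.
    case: (ltnP i h) => Hih /=; rewrite eqxx nk /=.
    - by rewrite mul1r !addr0.
    - by rewrite Ehi // mul1r add0r addr0.
  have -> : j = k.+1 by lia.
  case: (ltnP i h) => Hih /=; rewrite eqxx nk' /=.
  - by rewrite add0r mul1r mulN1r (addrC ((r == i)%:R)%R) addKr.
  - by rewrite Ehi // addr0 mul1r mulN1r addKr.
Qed.
End Tr.


Section Gad.
Variable F : finFieldType.

Definition NbG p q l := if l < p.*2.+1 then q else p * q.
Definition itG p q l c r : F :=
  if l < p.*2.+1 then ((r == (l * q + c)%N)%:R)%R else
  ((r == (((l - p.*2.+1 + (c %/ q).+1) %% p.*2.+1) * q + c %% q)%N)%:R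
   + (r == (((l - p.*2.+1 + p.*2.+1 - (c %/ q).+1) %% p.*2.+1) * q + c %% q)%N)%:R)%R.

Lemma gadget p q : 0 < p -> 0 < q ->
  NatCode (p.*2.+1 * q) p.*2.+1 (2 * p.*2.+1) (NbG p q) (itG p q).
Proof.
move=> Hp Hq; split.
  by move=> l _; rewrite /NbG; case: ifP => // _; rewrite muln_gt0 Hp Hq.
move=> i Hi; set d := p.*2.+1.
have Hd : 0 < d by [].
set v := i %/ q; set t := i %% q.
have Hv : v < d by rewrite ltn_divLR.
have Ht : t < q by rewrite ltn_pmod.
have Ei : i = v * q + t by rewrite /v /t -divn_eq.
pose sg l := if l < d then l else ((l - d).*2 + d - v) %% d.
pose wz z := (v + d - z) %% d.
pose sz z := if wz z <= p then wz z else d - wz z.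
pose cc l := if l < d then t else (sz (l - d)).-1 * q + t.
pose co l : F := if l < d then (if l == v then 1%R else (-1)%R) else (if l - d == v then 0%R else 1%R).
have szp z : sz z <= p.
  have : wz z < d by rewrite ltn_pmod.
  by rewrite /sz; case: ifP => //; rewrite /d; lia.
exists sg, cc, co; split.
- move=> l Hl; rewrite /sg; case: ifP => // _; by rewrite ltn_pmod.
- by move=> j Hj; exists j; [rewrite /d; lia | rewrite /sg Hj].
- move=> l Hl; rewrite /cc /NbG; case: ifP => // _.
  have := szp (l - d); move: (sz (l - d)) => a Ha.
  apply: (leq_trans (n := a.-1.+1 * q)); first by rewrite mulSn addnC ltn_add2r.
  by rewrite leq_mul2r; apply/orP; right; lia.
- move=> j r Hj Hr.
  rewrite (big_cat_nat (n:=d)) //=; last by rewrite /d; lia.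
  rewrite (@sum_pred1 _ 0 d j); first last.
  + by move=> l /andP[_ Hl]; rewrite /sg Hl => /eqP.
  + by rewrite /sg Hj.
  + by rewrite Hj.
  have [Z HZ EZ] := exZ p v j Hv Hj.
  rewrite (@sum_pred1 _ d (2 * d) (d + Z)); first last.
  + move=> l /andP[Hl1 Hl2]; rewrite /sg ltnNge Hl1 /= => /eqP E.
    have := @uniqZ p v (l - d) Z Hv ltac:(rewrite /d in Hl2 *; lia) HZ.
    rewrite -/d E EZ => /(_ erefl); lia.
  + by rewrite /sg ltnNge leq_addr /= addKn EZ.
  + rewrite /d in HZ *; lia.
  rewrite /co /itG /cc -/d Hj ltnNge leq_addr /= addKn.
  rewrite divnMDl // divn_small // addn0 modnMDl (modn_small Ht).
  have Evv : (v.*2 + d - v) %% d = v.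
    by rewrite (_ : v.*2 + d - v = v + d); [rewrite modnDr modn_small | lia].
  case: (eqVneq j v) => [Ejv | njv].
    have ZV : Z = v by apply: (@uniqZ p v Z v Hv HZ Hv); rewrite -/d EZ Evv.
    by rewrite Ejv ZV eqxx mul0r addr0 mul1r Ei.
  have nZ : Z != v by apply/eqP => ZV; move: EZ; rewrite ZV -/d Evv => /esym/eqP; rewrite (negbTE njv).
  have [Hs Hedge] := @edge p v j Z (wz Z) (sz Z) Hv Hj HZ EZ njv erefl erefl.
  rewrite (negbTE nZ) mul1r prednK; last by case/andP: Hs.
  rewrite -/d in Hedge; rewrite Ei mulN1r; case/orP: Hedge => /andP[/eqP -> /eqP ->].
    by rewrite (addrC ((r == (v * q + t)%N)%:R)%R) addKr.
  by rewrite addKr.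
Qed.
End Gad.


Section Fin.
Variable F : finFieldType.

Definition itP h l c r : F :=
  if l == 0 then ((r == c)%:R)%R else ((r == (h + c)%N)%:R)%R.

Lemma pairc h : 0 < h -> NatCode h.*2 1 2 (fun _ => h) (itP h).
Proof.
move=> h0; split => // i Hi.
exists (fun _ => 0), (fun _ => if i < h then i else i - h),
  (fun l => if i < h then (if l == 0 then 1%R else 0%R) else (if l == 0 then 0%R else 1%R)).
split => //.
- by move=> j Hj; exists 0 => //; lia.
- by move=> l _; case: ifP; lia.
- move=> j r Hj Hr; have -> : j = 0 by lia.
  rewrite !big_nat_recr //= big_geq // add0r /itP /=.
  case: ifP => Hih; first by rewrite mul1r mul0r addr0.
  by rewrite mul0r add0r mul1r subnKC //; lia.
Qed.

Lemma cost_gadget p q :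
  \sum_(0 <= l < 2 * p.*2.+1) NbG p q l = p.*2.+1 * q + p.*2.+1 * (p * q).
Proof.
rewrite (big_cat_nat (n := p.*2.+1)) //=; last lia.
rewrite (eq_big_nat _ _ (F2 := fun _ => q)); last by move=> l /andP[_ Hl]; rewrite /NbG Hl.
rewrite [X in _ + X](eq_big_nat _ _ (F2 := fun _ => p * q)); last first.
  by move=> l /andP[Hl _]; rewrite /NbG ltnNge Hl.
rewrite !sum_nat_const_nat; lia.
Qed.

Lemma cost_triple m h (Nb : nat -> nat) :
  \sum_(0 <= l < m.+3) (if l < m then Nb l else h) = \sum_(0 <= l < m) Nb l + 3 * h.
Proof.
have e1 : (m.+1 < m) = false by lia.
have e2 : (m.+2 < m) = false by lia.
rewrite !big_nat_recr //= ltnn e1 e2.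
rewrite (eq_big_nat _ _ (F2 := Nb)); last by move=> l /andP[_ ->].
lia.
Qed.

Lemma base n d : odd d -> d %| n -> 2 %| n -> 0 < n ->
  exists Nb (it : nat -> nat -> nat -> F), NatCode n d (2 * d) Nb it /\
     2 * \sum_(0 <= l < 2 * d) Nb l = d.+1 * n.
Proof.
move=> Hod Hdn H2n Hn.
have [p Ep] : exists p, d = p.*2.+1 by exists d./2; lia.
subst d; case: (posnP p) => [p0 | pp].
  subst p; have [h Eh] : exists h, n = h.*2 by move/dvdnP: H2n => [h ->]; exists h; rewrite muln2.
  subst n; exists (fun _ => h), (itP h); split; first by apply: pairc; move: Hn; rewrite double_gt0.
  by rewrite !big_nat_recr //= big_geq //; lia.
have Eq := divnK Hdn; set q := n %/ p.*2.+1 in Eq.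
have q0 : 0 < q by move: Hn; rewrite -Eq muln_gt0 => /andP[].
exists (NbG p q), (itG F p q); split; first by rewrite -Eq mulnC; apply: gadget.
rewrite cost_gadget -Eq; nia.
Qed.

Lemma iter_code n d h : odd d -> d %| n -> n = h.*2 -> 0 < h -> forall e,
  exists Nb (it : nat -> nat -> nat -> F), NatCode n (d + 2 * e) (2 * d + 3 * e) Nb it /\
     2 * \sum_(0 <= l < 2 * d + 3 * e) Nb l = (d.+1 + 3 * e) * n.
Proof.
move=> Hod Hdn En h0; elim=> [|e [Nb [it [HC Hc]]]].
  rewrite !muln0 !addn0; apply: base => //; [by rewrite En dvdn2 odd_double | lia].
exists (fun l => if l < 2 * d + 3 * e then Nb l else h), (itT (2 * d + 3 * e) h it).
have -> : d + 2 * e.+1 = (d + 2 * e).+2 by lia.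
have -> : 2 * d + 3 * e.+1 = (2 * d + 3 * e).+3 by lia.
split; first exact: add_triple.
rewrite cost_triple; lia.
Qed.
End Fin.


Theorem corollary4p10 (F : finFieldType) (n k m : nat) :
  (0 < n)%N -> (0 < k)%N -> (0 < m)%N ->
  (3 * k < 2 * m)%N -> (m < 2 * k)%N ->
  odd (2 * m - 3 * k) ->
  (lcmn (4 * m - 6 * k) (4 * k - 2 * m) %| n)%N ->
  exists (Nb : 'I_m -> nat) (G : forall l : 'I_m, 'M[F]_(n, Nb l)),
    is_PIR_array_code k G /\
    (2 * total_size Nb <= (3 * k - m + 1) * n)%N.
Proof.
move=> Hn Hk Hm H1 H2 Hodd Hl.
have [d Ed] : exists d, d = 2 * m - 3 * k by eexists.
have [e Ee] : exists e, e = 2 * k - m by eexists.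
have Ek : d + 2 * e = k by rewrite Ed Ee; move: H1 H2; clear; lia.
have Em : 2 * d + 3 * e = m by rewrite Ed Ee; move: H1 H2; clear; lia.
have E4 : 4 * m - 6 * k = 2 * d by rewrite Ed; move: H1 H2; clear; lia.
have E5 : 4 * k - 2 * m = 2 * e by rewrite Ee; move: H1 H2; clear; lia.
have H2d : 2 * d %| n.
  apply: dvdn_trans Hl; rewrite E4.
  exact: dvdn_lcml.
have H2e : 2 * e %| n.
  apply: dvdn_trans Hl; rewrite E5.
  exact: dvdn_lcmr.
have Hdn : d %| n by apply: dvdn_trans H2d; apply: dvdn_mull.
have H2n : 2 %| n by apply: dvdn_trans H2d; apply: dvdn_mulr.
have [h Eh] : exists h, n = h.*2 by move/dvdnP: H2n => [h ->]; exists h; rewrite muln2.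
have h0 : 0 < h by move: Hn; rewrite Eh double_gt0.
rewrite -Ed in Hodd.
have [Nb [it [HC Hc]]] := @iter_code F n d h Hodd Hdn Eh h0 e.
rewrite Ek Em in HC Hc.
exists (fun l : 'I_m => Nb l), (fun l : 'I_m => (\matrix_(r < n, c < Nb l) it l c r)%R).
split; first exact: to_code.
rewrite /total_size -(big_mkord xpredT Nb) Hc; apply: leq_mul => //; rewrite -Ek -Em; clear; lia.
Qed.
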